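(* Let $k\ge3$ and let $\mathcal B_k$ denote $\mathcal E_1$ if $k=3$ and $\mathcal E_{k-2}$ if $k\ge4$ (so $\mathcal B_k$ carries exactly the nonlocal coordinates $\psi^{(3)},\dots,\psi^{(k-1)}$). Then the horizontal $1$-form $\omega^{(k)}=X^{(k)}\,dx+Y^{(k)}\,dy$ is a nontrivial conservation law of $\mathcal B_k$: it satisfies $\mathcal D_y(X^{(k)})=\mathcal D_x(Y^{(k)})$, where $\mathcal D_x,\mathcal D_y$ are the total derivatives of $\mathcal B_k$, and there is no smooth function $g$ on $\mathcal B_k$ with $X^{(k)}=\mathcal D_x(g)$ and $Y^{(k)}=\mathcal D_y(g)$.
   Context: Let $\mathcal E_1$ be the system $u_y+vu_x=\frac1{v-u}$, $v_y+uv_x=\frac1{u-v}$ with internal coordinates $x,y,u_i=\partial^iu/\partial x^i$, $v_i=\partial^iv/\partial x^i$ ($i\ge0$) and total derivatives $D_x=\partial_x+\sum_i(u_{i+1}\partial_{u_i}+v_{i+1}\partial_{v_i})$, $D_y=\partial_y+\sum_i\big(D_x^i(\tfrac1{v-u}-vu_1)\partial_{u_i}+D_x^i(\tfrac1{u-v}-uv_1)\partial_{v_i}\big)$. Let $\sigma_m=\sum_{i+j=m}u^iv^j$, $\psi^{(1)}=y$, $\psi^{(2)}=x$, and let $\psi^{(k)}$, $k\ge3$, be new coordinates; for $k\ge2$ put $X^{(k)}=\sigma_{k-2}-\sum_{i=1}^{k-3}i\,\sigma_{k-i-3}\psi^{(i)}$ and for $k\ge3$ put $Y^{(k)}=-uv\,X^{(k-1)}-(k-2)\psi^{(k-2)}$.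 For $m\ge2$, $\mathcal E_m=\mathcal E_1\times\mathbb R^{m-1}$ has the additional coordinates $\psi^{(3)},\dots,\psi^{(m+1)}$ and the total derivatives $D^{(m)}_x=D_x+\sum_{i=3}^{m+1}X^{(i)}\partial/\partial\psi^{(i)}$, $D^{(m)}_y=D_y+\sum_{i=3}^{m+1}Y^{(i)}\partial/\partial\psi^{(i)}$. *)

(* Defs.v *)
From Stdlib Require Import Reals List Arith.
From Coquelicot Require Import Coquelicot.
Open Scope R_scope.

(** Internal coordinates of E_m (all m at once):
    x, y, u_i, v_i (i >= 0), and the nonlocal psi^(j) (only j >= 3 used). *)
Inductive coord : Type :=
| Cx | Cy | Cu (i : nat) | Cv (i : nat) | Cpsi (j : nat).

Definition coord_eq_dec (a b : coord) : {a = b} + {a <> b}.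
Proof. decide equality; apply Nat.eq_dec. Defined.

Definition point := coord -> R.

(** Domain of the system: u <> v (the equation involves 1/(v-u)). *)
Definition Dom (p : point) : Prop := p (Cu 0) <> p (Cv 0).

Definition upd (p : point) (c : coord) (t : R) : point :=
  fun c' => if coord_eq_dec c' c then t else p c'.

Definition partial (c : coord) (f : point -> R) : point -> R :=
  fun p => Derive (fun t => f (upd p c t)) (p c).

Definition iterpartial (cs : list coord) (f : point -> R) : point -> R :=
  fold_right partial f cs.

(** Continuity at p (sup-distance on coordinates; for functions depending on
    finitely many coordinates this is ordinary continuity). *)
Definition cont_at (f : point -> R) (p : point) : Prop :=
  forall eps : R, 0 < eps -> exists delta : R, 0 < delta /\
    forall q : point, (forall c, Rabs (q c - p c) < delta) ->
      Rabs (f q - f p) < eps.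

Definition smooth_on (f : point -> R) : Prop :=
  forall (cs : list coord) (p : point), Dom p ->
    (forall c, ex_derive (fun t => iterpartial cs f (upd p c t)) (p c)) /\
    cont_at (iterpartial cs f) p.

Definition rsum (l : list nat) (F : nat -> R) : R :=
  fold_right Rplus 0 (map F l).

Definition psi (j : nat) (p : point) : R :=
  if Nat.eqb j 1 then p Cy else if Nat.eqb j 2 then p Cx else p (Cpsi j).

Definition uu (p : point) := p (Cu 0).
Definition vv (p : point) := p (Cv 0).

Definition sigma (m : nat) (p : point) : R :=
  rsum (seq 0 (S m)) (fun i => uu p ^ i * vv p ^ (m - i)).

Definition Xk (k : nat) (p : point) : R :=
  sigma (k - 2) p -
  rsum (seq 1 (k - 3)) (fun i => INR i * sigma (k - i - 3) p * psi i p).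

Definition Yk (k : nat) (p : point) : R :=
  - (uu p * vv p * Xk (k - 1) p) - INR (k - 2) * psi (k - 2) p.

(** Total derivative D_x of E_1, truncated to u_j, v_j with j < M
    (used to build the coefficients of D_y). *)
Definition Dx0 (M : nat) (f : point -> R) : point -> R :=
  fun p => partial Cx f p +
    rsum (seq 0 M) (fun j => p (Cu (S j)) * partial (Cu j) f p
                           + p (Cv (S j)) * partial (Cv j) f p).

(** Right-hand sides of the evolution: u_y = 1/(v-u) - v u_1, v_y = 1/(u-v) - u v_1. *)
Definition Fu (p : point) : R := / (vv p - uu p) - vv p * p (Cu 1).
Definition Fv (p : point) : R := / (uu p - vv p) - uu p * p (Cv 1).

(** Coefficients D_x^i(F_u), D_x^i(F_v) (D_x^i F depends on u_j,v_j, j <= i+1,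
    so truncation i+1 is exact). *)
Definition cu (i : nat) : point -> R := Nat.iter i (Dx0 (S i)) Fu.
Definition cv (i : nat) : point -> R := Nat.iter i (Dx0 (S i)) Fv.

(** Total derivatives of B_k (nonlocal coordinates psi^(3..k-1)), applied to a
    function depending only on u_j, v_j with j <= N (truncation N). *)
Definition DxB (k N : nat) (f : point -> R) : point -> R :=
  fun p => partial Cx f p +
    rsum (seq 0 (S N)) (fun j => p (Cu (S j)) * partial (Cu j) f p
                               + p (Cv (S j)) * partial (Cv j) f p) +
    rsum (seq 3 (k - 3)) (fun i => Xk i p * partial (Cpsi i) f p).

Definition DyB (k N : nat) (f : point -> R) : point -> R :=
  fun p => partial Cy f p +
    rsum (seq 0 (S N)) (fun j => cu j p * partial (Cu j) f p
                               + cv j p * partial (Cv j) f p) +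
    rsum (seq 3 (k - 3)) (fun i => Yk i p * partial (Cpsi i) f p).

Definition relevant (k N : nat) (c : coord) : Prop :=
  match c with
  | Cx | Cy => True
  | Cu j | Cv j => (j <= N)%nat
  | Cpsi j => (3 <= j)%nat /\ (j <= k - 1)%nat
  end.

Definition depends_on (k N : nat) (g : point -> R) : Prop :=
  forall p q : point, (forall c, relevant k N c -> p c = q c) -> g p = g q.

(* Main.v *)
From Stdlib Require Import Reals List Arith Lia Lra FunctionalExtensionality.
From Coquelicot Require Import Coquelicot.
Require Import Defs.
Open Scope R_scope.


Lemma upd_same p c t : upd p c t c = t.
Proof. unfold upd; destruct (coord_eq_dec c c); congruence. Qed.
Lemma upd_other p c t c' : c' <> c -> upd p c t c' = p c'.
Proof. intro H; unfold upd; destruct (coord_eq_dec c' c); congruence. Qed.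
Lemma upd_upd p c t s : upd (upd p c t) c s = upd p c s.
Proof. apply functional_extensionality; intro c'; unfold upd; destruct (coord_eq_dec c' c); auto. Qed.
Lemma upd_comm p c c' t s : c <> c' -> upd (upd p c t) c' s = upd (upd p c' s) c t.
Proof. intro H; apply functional_extensionality; intro d; unfold upd;
  destruct (coord_eq_dec d c'); destruct (coord_eq_dec d c); subst; congruence. Qed.
Lemma upd_id p c : upd p c (p c) = p.
Proof. apply functional_extensionality; intro d; unfold upd; destruct (coord_eq_dec d c); subst; auto. Qed.

Lemma rsum_nil f : rsum nil f = 0. Proof. reflexivity. Qed.
Lemma rsum_cons a l f : rsum (a :: l) f = f a + rsum l f. Proof. reflexivity. Qed.
Lemma rsum_app l1 l2 f : rsum (l1 ++ l2) f = rsum l1 f + rsum l2 f.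
Proof. induction l1; unfold rsum in *; simpl. ring. rewrite IHl1; ring. Qed.
Lemma rsum_ext l f g : (forall x, In x l -> f x = g x) -> rsum l f = rsum l g.
Proof. induction l; intros H; simpl. reflexivity. unfold rsum in *; simpl.
  rewrite H by (left; auto). rewrite IHl; auto. intros; apply H; right; auto. Qed.
Lemma rsum_plus l f g : rsum l (fun i => f i + g i) = rsum l f + rsum l g.
Proof. induction l; unfold rsum in *; simpl. ring. rewrite IHl; ring. Qed.
Lemma rsum_scal l c f : rsum l (fun i => c * f i) = c * rsum l f.
Proof. induction l; unfold rsum in *; simpl. ring. rewrite IHl; ring. Qed.
Lemma rsum_zero l f : (forall x, In x l -> f x = 0) -> rsum l f = 0.
Proof. intro H; rewrite (rsum_ext l f (fun _ => 0)) by auto. induction l; unfold rsum in *; simpl; auto.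
  rewrite IHl. ring. intros; apply H; right; auto. Qed.
Lemma rsum_map l (h : nat -> nat) f : rsum (map h l) f = rsum l (fun i => f (h i)).
Proof. induction l; unfold rsum in *; simpl; auto. rewrite IHl; auto. Qed.
Lemma rsum_single n s j f : (s <= j < s + n)%nat -> (forall i, i <> j -> f i = 0) ->
  rsum (seq s n) f = f j.
Proof. revert s; induction n; intros s Hj Hf. lia.
  simpl seq. rewrite rsum_cons. destruct (Nat.eq_dec s j).
  - subst. rewrite rsum_zero. ring. intros x Hx; apply in_seq in Hx. apply Hf; lia.
  - rewrite Hf by auto. rewrite IHn by (auto; lia). ring. Qed.
Lemma rsum_abs l f g : (forall x, In x l -> Rabs (f x) <= g x) -> Rabs (rsum l f) <= rsum l g.
Proof. induction l; intros H; unfold rsum in *; simpl. rewrite Rabs_R0; lra.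
  eapply Rle_trans. apply Rabs_triang. apply Rplus_le_compat. apply H; left; auto.
  apply IHl; intros; apply H; right; auto. Qed.


Definition Diff (f : point -> R) := forall p c, ex_derive (fun t => f (upd p c t)) (p c).

Lemma Diff_at f p c t : Diff f -> ex_derive (fun s => f (upd p c s)) t.
Proof. intro H. specialize (H (upd p c t) c). rewrite upd_same in H.
  eapply ex_derive_ext; [|exact H]. intro s; simpl; rewrite upd_upd; auto. Qed.

Lemma Diff_const a : Diff (fun _ => a).
Proof. intros p c; apply ex_derive_const. Qed.
Lemma Diff_coord c0 : Diff (fun q => q c0).
Proof. intros p c. destruct (coord_eq_dec c0 c).
  - subst. eapply ex_derive_ext; [|apply ex_derive_id]. intro; simpl; rewrite upd_same; auto.
  - eapply ex_derive_ext; [|apply (ex_derive_const (p c0))]. intro; simpl; rewrite upd_other; auto. Qed.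
Lemma Diff_plus f g : Diff f -> Diff g -> Diff (fun q => f q + g q).
Proof. intros Hf Hg p c. apply (ex_derive_plus (fun t => f (upd p c t)) (fun t => g (upd p c t))); auto. Qed.
Lemma Diff_minus f g : Diff f -> Diff g -> Diff (fun q => f q - g q).
Proof. intros Hf Hg p c. apply (ex_derive_minus (fun t => f (upd p c t)) (fun t => g (upd p c t))); auto. Qed.
Lemma Diff_opp f : Diff f -> Diff (fun q => - f q).
Proof. intros Hf p c. apply (ex_derive_opp (fun t => f (upd p c t))); auto. Qed.
Lemma Diff_mult f g : Diff f -> Diff g -> Diff (fun q => f q * g q).
Proof. intros Hf Hg p c. apply (ex_derive_mult (fun t => f (upd p c t)) (fun t => g (upd p c t))); auto. Qed.

Lemma partial_const a c p : partial c (fun _ => a) p = 0.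
Proof. unfold partial; apply Derive_const. Qed.
Lemma partial_coord c0 c p : partial c (fun q => q c0) p = if coord_eq_dec c c0 then 1 else 0.
Proof. unfold partial. destruct (coord_eq_dec c c0).
  - subst. rewrite (Derive_ext _ id). apply Derive_id. intro; rewrite upd_same; auto.
  - rewrite (Derive_ext _ (fun _ => p c0)). apply Derive_const. intro; rewrite upd_other; auto. Qed.
Lemma partial_plus f g c p : Diff f -> Diff g ->
  partial c (fun q => f q + g q) p = partial c f p + partial c g p.
Proof. intros; unfold partial. apply (Derive_plus (fun t => f (upd p c t)) (fun t => g (upd p c t))); auto. Qed.
Lemma partial_minus f g c p : Diff f -> Diff g ->
  partial c (fun q => f q - g q) p = partial c f p - partial c g p.
Proof. intros; unfold partial. apply (Derive_minus (fun t => f (upd p c t)) (fun t => g (upd p c t))); auto. Qed.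
Lemma partial_opp f c p : partial c (fun q => - f q) p = - partial c f p.
Proof. unfold partial. apply (Derive_opp (fun t => f (upd p c t))). Qed.
Lemma partial_mult f g c p : Diff f -> Diff g ->
  partial c (fun q => f q * g q) p = partial c f p * g p + f p * partial c g p.
Proof. intros; unfold partial. rewrite (Derive_mult (fun t => f (upd p c t)) (fun t => g (upd p c t))); auto.
  rewrite upd_id; auto. Qed.
Lemma partial_noread f c p : (forall t, f (upd p c t) = f p) -> partial c f p = 0.
Proof. intro H; unfold partial. rewrite (Derive_ext _ (fun _ => f p)) by auto. apply Derive_const. Qed.

Lemma Derive_ext_except (f1 f2 : R -> R) x a : x <> a -> (forall s, s <> a -> f1 s = f2 s) ->
  Derive f1 x = Derive f2 x.
Proof. intros Hx H. apply Derive_ext_loc.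
  assert (He : 0 < Rabs (x - a)) by (apply Rabs_pos_lt; lra).
  exists (mkposreal _ He). intros y Hy. apply H. intro; subst.
  change (Rabs (a - x) < Rabs (x - a)) in Hy. rewrite Rabs_minus_sym in Hy. lra. Qed.

Lemma const_MVT (h : R -> R) a b :
  (forall s, Rmin a b <= s <= Rmax a b -> ex_derive h s /\ Derive h s = 0) -> h a = h b.
Proof. intro H. destruct (MVT_gen h a b (fun _ => 0)) as [c [_ Hc]].
  - intros x Hx. destruct (H x) as [H1 H2]. lra. rewrite <- H2. apply Derive_correct; auto.
  - intros x Hx. apply continuity_pt_filterlim. apply (ex_derive_continuous (K:=R_AbsRing) (V:=R_NormedModule) h). apply H; auto.
  - lra. Qed.


Lemma sigma_0 p : sigma 0%nat p = 1.
Proof. unfold sigma, rsum; simpl; ring. Qed.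
Lemma sigma_1 p : sigma 1%nat p = uu p + vv p.
Proof. unfold sigma, rsum; simpl; ring. Qed.
Lemma sigma_S m p : sigma (S m) p = vv p ^ (S m) + uu p * sigma m p.
Proof. unfold sigma. change (seq 0 (S (S m))) with (0%nat :: seq 1 (S m)).
  rewrite rsum_cons, <- seq_shift, rsum_map. rewrite <- rsum_scal.
  f_equal. rewrite Nat.sub_0_r; ring. apply rsum_ext; intros i _. simpl. ring. Qed.
Lemma sigma_rec m p : sigma (S (S m)) p = (uu p + vv p) * sigma (S m) p - uu p * vv p * sigma m p.
Proof. rewrite (sigma_S (S m)). rewrite (sigma_S m). simpl; ring. Qed.

Definition Conv (c : nat -> R) (n : nat) (p : point) : R :=
  rsum (seq 1 n) (fun i => c i * sigma (n - i) p).

Lemma Conv_rec c n p : Conv c (S (S n)) p =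
  (uu p + vv p) * Conv c (S n) p - uu p * vv p * Conv c n p + c (S (S n)).
Proof. unfold Conv. rewrite seq_S, seq_S, !rsum_app. rewrite !rsum_cons, !rsum_nil.
  replace (S (S n) - (1 + n))%nat with 1%nat by lia.
  replace (S n - (1 + n))%nat with 0%nat by lia.
  replace (S (S n) - (1 + S n))%nat with 0%nat by lia.
  replace (1 + S n)%nat with (S (S n)) by lia.
  rewrite sigma_0, sigma_1.
  rewrite (rsum_ext _ (fun i => c i * sigma (S (S n) - i) p)
     (fun i => (uu p + vv p) * (c i * sigma (S n - i) p) + (- (uu p * vv p)) * (c i * sigma (n - i) p))).
  2:{ intros i Hi; apply in_seq in Hi. replace (S (S n) - i)%nat with (S (S (n - i))) by lia.
      replace (S n - i)%nat with (S (n - i)) by lia. rewrite sigma_rec. ring. }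
  rewrite rsum_plus, !rsum_scal. ring. Qed.

Definition Xp (j : nat) (p : point) : R := if (j <=? 1)%nat then 0 else Xk j p.

Lemma Xk_C n p : Xk (S (S (S n))) p = sigma (S n) p - Conv (fun i => INR i * psi i p) n p.
Proof. unfold Xk, Conv. replace (S (S (S n)) - 2)%nat with (S n) by lia.
  replace (S (S (S n)) - 3)%nat with n by lia. f_equal. apply rsum_ext; intros i Hi.
  replace (S (S (S n)) - i - 3)%nat with (n - i)%nat by lia. ring. Qed.
Lemma Xk_2 p : Xk 2%nat p = 1.
Proof. unfold Xk. simpl. rewrite sigma_0. unfold rsum; simpl; ring. Qed.

Lemma Xp_ge j p : (2 <= j)%nat -> Xp j p = Xk j p.
Proof. intro H; unfold Xp. destruct (Nat.leb_spec j 1); [lia|auto]. Qed.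

Lemma Xp_rec j p : Xp (S (S (S j))) p =
  (uu p + vv p) * Xp (S (S j)) p - uu p * vv p * Xp (S j) p - INR j * psi j p.
Proof. unfold Xp. 
  destruct j as [|[|n]].
  - simpl Nat.leb; cbv iota. rewrite Xk_C, Xk_2, sigma_1. unfold Conv; simpl seq; rewrite rsum_nil; simpl INR; ring.
  - simpl Nat.leb; cbv iota. rewrite !Xk_C, Xk_2, sigma_rec, sigma_1, sigma_0. unfold Conv; simpl seq.
    rewrite rsum_cons, rsum_nil. simpl INR. simpl (1-1)%nat. rewrite sigma_0, rsum_nil. ring.
  - fold (Xp (S (S (S (S (S n))))) p) (Xp (S (S (S (S n)))) p) (Xp (S (S (S n))) p).
    rewrite !Xp_ge by lia. rewrite !Xk_C, sigma_rec, Conv_rec. ring. Qed.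

Lemma Xp_eq j : (2 <= j)%nat -> Xp j = Xk j.
Proof. intro H; apply functional_extensionality; intro p; unfold Xp.
  destruct (Nat.leb_spec j 1); [lia|auto]. Qed.

Definition cpsi (j : nat) : coord :=
  if Nat.eqb j 1 then Cy else if Nat.eqb j 2 then Cx else Cpsi j.
Lemma psi_coord j : psi j = fun p => p (cpsi j).
Proof. apply functional_extensionality; intro p; unfold psi, cpsi.
  destruct (Nat.eqb j 1), (Nat.eqb j 2); auto. Qed.

Lemma Xk_ext (i : nat) (p q : point) : q (Cu 0) = p (Cu 0) -> q (Cv 0) = p (Cv 0) -> q Cx = p Cx -> q Cy = p Cy ->
  (forall j, q (Cpsi j) = p (Cpsi j)) -> Xk i q = Xk i p.
Proof. intros H1 H2 H3 H4 H5.
  assert (Hs : forall m, sigma m q = sigma m p) by (intro; unfold sigma, uu, vv; rewrite H1, H2; auto).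
  assert (Hp : forall j, psi j q = psi j p) by (intro j; rewrite !psi_coord; unfold cpsi;
     destruct (Nat.eqb j 1), (Nat.eqb j 2); auto).
  unfold Xk. rewrite Hs. f_equal. apply rsum_ext; intros. rewrite Hs, Hp; auto. Qed.
Lemma Yk_ext (i : nat) (p q : point) : q (Cu 0) = p (Cu 0) -> q (Cv 0) = p (Cv 0) -> q Cx = p Cx -> q Cy = p Cy ->
  (forall j, q (Cpsi j) = p (Cpsi j)) -> Yk i q = Yk i p.
Proof. intros H1 H2 H3 H4 H5. unfold Yk. rewrite (Xk_ext _ p q) by auto.
  unfold uu, vv; rewrite H1, H2. f_equal. f_equal. rewrite !psi_coord; unfold cpsi.
  destruct (Nat.eqb (i-2) 1), (Nat.eqb (i-2) 2); auto. Qed.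

Lemma Diff_Xp j : Diff (Xp j).
Proof.
  assert (forall n m, (m <= n)%nat -> Diff (Xp m)).
  { clear j. induction n; intros j Hj.
    - replace j with 0%nat by lia. replace (Xp 0) with (fun _ : point => 0) by reflexivity. apply Diff_const.
    - destruct j as [|[|[|j]]].
      + replace (Xp 0) with (fun _ : point => 0) by reflexivity. apply Diff_const.
      + replace (Xp 1) with (fun _ : point => 0) by reflexivity. apply Diff_const.
      + replace (Xp 2) with (fun _ : point => 1). apply Diff_const.
        apply functional_extensionality; intro; unfold Xp; simpl; rewrite Xk_2; auto.
      + replace (Xp (S (S (S j)))) with (fun p => (uu p + vv p) * Xp (S (S j)) p - uu p * vv p * Xp (S j) p - INR j * psi j p).
        2:{ apply functional_extensionality; intro; rewrite Xp_rec; auto. }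
        rewrite psi_coord. unfold uu, vv.
        apply Diff_minus; [apply Diff_minus|apply Diff_mult; [apply Diff_const|apply Diff_coord]].
        * apply Diff_mult; [apply Diff_plus; apply Diff_coord|apply IHn; lia].
        * apply Diff_mult; [apply Diff_mult; apply Diff_coord|apply IHn; lia]. }
  intros; apply (H j); auto. Qed.


Definition DD (a0 : coord) (cu cv : point -> R) (h : nat -> point -> R) (K : nat)
  (f : point -> R) (p : point) : R :=
  partial a0 f p + cu p * partial (Cu 0) f p + cv p * partial (Cv 0) f p +
  rsum (seq 3 (K - 3)) (fun i => h i p * partial (Cpsi i) f p).

Section DDs.
Variables (a0 : coord) (cu cv : point -> R) (h : nat -> point -> R) (K : nat).

Lemma DD_const a p : DD a0 cu cv h K (fun _ => a) p = 0.
Proof. unfold DD. rewrite !partial_const. rewrite rsum_zero. ring.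
  intros; rewrite partial_const; ring. Qed.

Lemma DD_plus f g p : Diff f -> Diff g ->
  DD a0 cu cv h K (fun q => f q + g q) p = DD a0 cu cv h K f p + DD a0 cu cv h K g p.
Proof. intros Hf Hg. unfold DD. rewrite !partial_plus by auto.
  rewrite (rsum_ext _ _ (fun i => h i p * partial (Cpsi i) f p + h i p * partial (Cpsi i) g p)).
  rewrite rsum_plus. ring. intros; rewrite partial_plus by auto; ring. Qed.

Lemma DD_minus f g p : Diff f -> Diff g ->
  DD a0 cu cv h K (fun q => f q - g q) p = DD a0 cu cv h K f p - DD a0 cu cv h K g p.
Proof. intros Hf Hg. unfold DD. rewrite !partial_minus by auto.
  rewrite (rsum_ext _ _ (fun i => h i p * partial (Cpsi i) f p + (-1) * (h i p * partial (Cpsi i) g p))).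
  rewrite rsum_plus, rsum_scal. ring. intros; rewrite partial_minus by auto; ring. Qed.

Lemma DD_opp f p : DD a0 cu cv h K (fun q => - f q) p = - DD a0 cu cv h K f p.
Proof. unfold DD. rewrite !partial_opp.
  rewrite (rsum_ext _ _ (fun i => (-1) * (h i p * partial (Cpsi i) f p))).
  rewrite rsum_scal. ring. intros; rewrite partial_opp; ring. Qed.

Lemma DD_mult f g p : Diff f -> Diff g ->
  DD a0 cu cv h K (fun q => f q * g q) p = DD a0 cu cv h K f p * g p + f p * DD a0 cu cv h K g p.
Proof. intros Hf Hg. unfold DD. rewrite !partial_mult by auto.
  rewrite (rsum_ext _ _ (fun i => g p * (h i p * partial (Cpsi i) f p) + f p * (h i p * partial (Cpsi i) g p))).
  rewrite rsum_plus, !rsum_scal. ring. intros; rewrite partial_mult by auto; ring. Qed.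

Lemma DD_u0 p : a0 <> Cu 0 -> DD a0 cu cv h K (fun q => q (Cu 0)) p = cu p.
Proof. intro H. unfold DD. rewrite !partial_coord. rewrite rsum_zero.
  destruct (coord_eq_dec a0 (Cu 0)); [congruence|].
  destruct (coord_eq_dec (Cu 0) (Cu 0)); [|congruence].
  destruct (coord_eq_dec (Cv 0) (Cu 0)); [discriminate|]. ring.
  intros; rewrite partial_coord. destruct (coord_eq_dec (Cpsi x) (Cu 0)); [discriminate|ring]. Qed.

Lemma DD_v0 p : a0 <> Cv 0 -> DD a0 cu cv h K (fun q => q (Cv 0)) p = cv p.
Proof. intro H. unfold DD. rewrite !partial_coord. rewrite rsum_zero.
  destruct (coord_eq_dec a0 (Cv 0)); [congruence|].
  destruct (coord_eq_dec (Cv 0) (Cv 0)); [|congruence].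
  destruct (coord_eq_dec (Cu 0) (Cv 0)); [discriminate|]. ring.
  intros; rewrite partial_coord. destruct (coord_eq_dec (Cpsi x) (Cv 0)); [discriminate|ring]. Qed.

Lemma DD_psi_big j p : a0 <> Cpsi j -> (3 <= j < K)%nat ->
  DD a0 cu cv h K (fun q => q (Cpsi j)) p = h j p.
Proof. intros H Hj. unfold DD. rewrite !partial_coord.
  destruct (coord_eq_dec a0 (Cpsi j)); [congruence|].
  destruct (coord_eq_dec (Cu 0) (Cpsi j)); [discriminate|].
  destruct (coord_eq_dec (Cv 0) (Cpsi j)); [discriminate|].
  rewrite (rsum_single _ _ j). rewrite partial_coord. destruct (coord_eq_dec (Cpsi j) (Cpsi j)); [ring|congruence].
  lia. intros i Hi. rewrite partial_coord. destruct (coord_eq_dec (Cpsi i) (Cpsi j)); [congruence|ring]. Qed.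

Lemma DD_other c p : (forall i, c <> Cpsi i) -> c <> Cu 0 -> c <> Cv 0 ->
  DD a0 cu cv h K (fun q => q c) p = if coord_eq_dec a0 c then 1 else 0.
Proof. intros H1 H2 H3. unfold DD. rewrite !partial_coord. rewrite rsum_zero.
  destruct (coord_eq_dec (Cu 0) c); [congruence|].
  destruct (coord_eq_dec (Cv 0) c); [congruence|]. ring.
  intros i _. rewrite partial_coord. destruct (coord_eq_dec (Cpsi i) c); [exfalso; eapply H1; eauto|ring]. Qed.

Lemma DD_psi0 p : DD a0 cu cv h K (fun q => q (Cpsi 0)) p = if coord_eq_dec a0 (Cpsi 0) then 1 else 0.
Proof. unfold DD. rewrite !partial_coord. rewrite rsum_zero.
  destruct (coord_eq_dec (Cu 0) (Cpsi 0)); [discriminate|].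
  destruct (coord_eq_dec (Cv 0) (Cpsi 0)); [discriminate|]. ring.
  intros i Hi. apply in_seq in Hi. rewrite partial_coord. destruct (coord_eq_dec (Cpsi i) (Cpsi 0)); [inversion e; lia|ring]. Qed.

End DDs.


Section DDs2.
Variables (a0 : coord) (cu cv : point -> R) (h : nat -> point -> R) (K : nat).

Lemma DD_Xp_rec j p : a0 <> Cu 0 -> a0 <> Cv 0 ->
  DD a0 cu cv h K (Xp (S (S (S j)))) p =
  (cu p + cv p) * Xp (S (S j)) p + (uu p + vv p) * DD a0 cu cv h K (Xp (S (S j))) p
  - (cu p * vv p + uu p * cv p) * Xp (S j) p - uu p * vv p * DD a0 cu cv h K (Xp (S j)) p
  - INR j * DD a0 cu cv h K (psi j) p.
Proof. intros Hu Hv.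
  set (fU := fun q : point => q (Cu 0)). set (fV := fun q : point => q (Cv 0)).
  set (X2 := Xp (S (S j))). set (X1 := Xp (S j)). set (P := psi j).
  assert (HP : Diff P). { unfold P; rewrite psi_coord; apply Diff_coord. }
  assert (H0 : Diff fU) by apply Diff_coord. assert (H1 : Diff fV) by apply Diff_coord.
  assert (HX1 : Diff X1) by apply Diff_Xp. assert (HX2 : Diff X2) by apply Diff_Xp.
  replace (Xp (S (S (S j)))) with (fun q => (fun q => (fun q => fU q + fV q) q * X2 q) q - (fun q => (fun q => fU q * fV q) q * X1 q) q - (fun q => INR j * P q) q).
  2:{ apply functional_extensionality; intro; rewrite Xp_rec; auto. }
  assert (Hs : Diff (fun q => fU q + fV q)) by (apply Diff_plus; auto).
  assert (Hm : Diff (fun q => fU q * fV q)) by (apply Diff_mult; auto).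
  assert (Hc : Diff (fun _ : point => INR j)) by apply Diff_const.
  rewrite (DD_minus _ _ _ _ _ (fun q => (fun q => (fun q => fU q + fV q) q * X2 q) q - (fun q => (fun q => fU q * fV q) q * X1 q) q) (fun q => INR j * P q)).
  2: apply Diff_minus; apply Diff_mult; auto.
  2: apply Diff_mult; auto.
  rewrite (DD_minus _ _ _ _ _ (fun q => (fun q => fU q + fV q) q * X2 q) (fun q => (fun q => fU q * fV q) q * X1 q)).
  2,3: apply Diff_mult; auto.
  rewrite (DD_mult _ _ _ _ _ (fun q => fU q + fV q) X2) by auto.
  rewrite (DD_mult _ _ _ _ _ (fun q => fU q * fV q) X1) by auto.
  rewrite (DD_mult _ _ _ _ _ (fun _ => INR j) P) by auto.
  rewrite (DD_plus _ _ _ _ _ fU fV) by auto.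
  rewrite (DD_mult _ _ _ _ _ fU fV) by auto.
  unfold fU, fV. rewrite DD_u0, DD_v0, DD_const by auto.
  unfold uu, vv. ring.
Qed.

Definition Yp (j : nat) (q : point) : R := - (uu q * vv q * Xp (j - 1) q) - INR (j - 2) * psi (j - 2) q.

Lemma DD_Yp j p : a0 <> Cu 0 -> a0 <> Cv 0 ->
  DD a0 cu cv h K (Yp j) p =
  - ((cu p * vv p + uu p * cv p) * Xp (j - 1) p + uu p * vv p * DD a0 cu cv h K (Xp (j - 1)) p)
  - INR (j - 2) * DD a0 cu cv h K (psi (j - 2)) p.
Proof. intros Hu Hv.
  set (fU := fun q : point => q (Cu 0)). set (fV := fun q : point => q (Cv 0)).
  set (X1 := Xp (j - 1)). set (P := psi (j - 2)).
  assert (HP : Diff P). { unfold P; rewrite psi_coord; apply Diff_coord. }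
  assert (H0 : Diff fU) by apply Diff_coord. assert (H1 : Diff fV) by apply Diff_coord.
  assert (HX1 : Diff X1) by apply Diff_Xp.
  assert (Hm : Diff (fun q => fU q * fV q)) by (apply Diff_mult; auto).
  assert (Hc : Diff (fun _ : point => INR (j-2))) by apply Diff_const.
  replace (Yp j) with (fun q => (fun q => - (fun q => (fun q => fU q * fV q) q * X1 q) q) q - (fun q => INR (j-2) * P q) q) by reflexivity.
  rewrite (DD_minus _ _ _ _ _ (fun q => - (fun q => (fun q => fU q * fV q) q * X1 q) q) (fun q => INR (j-2) * P q)).
  2: apply Diff_opp, Diff_mult; auto.
  2: apply Diff_mult; auto.
  rewrite (DD_opp _ _ _ _ _ (fun q => (fun q => fU q * fV q) q * X1 q)).
  rewrite (DD_mult _ _ _ _ _ (fun q => fU q * fV q) X1) by auto.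
  rewrite (DD_mult _ _ _ _ _ (fun _ => INR (j-2)) P) by auto.
  rewrite (DD_mult _ _ _ _ _ fU fV) by auto.
  unfold fU, fV. rewrite DD_u0, DD_v0, DD_const by auto.
  unfold uu, vv. ring. Qed.
End DDs2.


Lemma alg u v u1 v1 x0 x1 x2 x3 D E Yf A B C n : u <> v ->
 A = -((u1*v+u*v1)*x2 + u*v*D) - (n+1)*x1 ->
 B = -((u1*v+u*v1)*x1 + u*v*E) - n*x0 ->
 C = (u1+v1)*x2 + (u+v)*D - (u1*v+u*v1)*x1 - u*v*E - n*x0 ->
 Yf = x2 - (u+v)*x1 ->
 ((/(v-u) - v*u1) + (/(u-v) - u*v1))*x3 + (u+v)*A - ((/(v-u) - v*u1)*v+u*(/(u-v) - u*v1))*x2 - u*v*B - (n+1)*Yf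
 = -((u1*v+u*v1)*x3 + u*v*C) - (n+2)*x2.
Proof. intros Huv HA HB HC HY. subst. field. repeat split; intro; apply Huv; lra. Qed.

Lemma alg3 u v u1 v1 : u <> v -> ((/(v-u) - v*u1) + (/(u-v) - u*v1)) = -(u1*v+u*v1).
Proof. intros Huv. field. repeat split; intro; apply Huv; lra. Qed.

Lemma upd_hi_u j q t : (1 <= j)%nat -> forall c, (c = Cu 0 \/ c = Cv 0 \/ c = Cx \/ c = Cy \/ exists i, c = Cpsi i) ->
  upd q (Cu j) t c = q c.
Proof. intros Hj c Hc. apply upd_other. intro; subst.
  destruct Hc as [H|[H|[H|[H|[i H]]]]]; inversion H; lia. Qed.
Lemma upd_hi_v j q t : (1 <= j)%nat -> forall c, (c = Cu 0 \/ c = Cv 0 \/ c = Cx \/ c = Cy \/ exists i, c = Cpsi i) ->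
  upd q (Cv j) t c = q c.
Proof. intros Hj c Hc. apply upd_other. intro; subst.
  destruct Hc as [H|[H|[H|[H|[i H]]]]]; inversion H; lia. Qed.

Lemma Xk_hi i j q t : (1 <= j)%nat -> Xk i (upd q (Cu j) t) = Xk i q /\ Xk i (upd q (Cv j) t) = Xk i q.
Proof. intro Hj. split; apply Xk_ext; intros; try (apply upd_hi_u || apply upd_hi_v); eauto 7. Qed.
Lemma Yk_hi i j q t : (1 <= j)%nat -> Yk i (upd q (Cu j) t) = Yk i q /\ Yk i (upd q (Cv j) t) = Yk i q.
Proof. intro Hj. split; apply Yk_ext; intros; try (apply upd_hi_u || apply upd_hi_v); eauto 7. Qed.

Lemma DyB_DD k N f p : (forall j q t, (1 <= j)%nat -> f (upd q (Cu j) t) = f q /\ f (upd q (Cv j) t) = f q) ->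
  DyB k N f p = DD Cy Fu Fv Yk k f p.
Proof. intro H. unfold DyB, DD. simpl seq. rewrite rsum_cons. rewrite (rsum_zero (seq 1 N)).
  unfold cu, cv; simpl Nat.iter. ring.
  intros j Hj; apply in_seq in Hj. rewrite !partial_noread. ring.
  intro; apply H; lia. intro; apply H; lia. Qed.
Lemma DxB_DD k N f p : (forall j q t, (1 <= j)%nat -> f (upd q (Cu j) t) = f q /\ f (upd q (Cv j) t) = f q) ->
  DxB k N f p = DD Cx (fun q => q (Cu 1)) (fun q => q (Cv 1)) Xk k f p.
Proof. intro H. unfold DxB, DD. simpl seq. rewrite rsum_cons. rewrite (rsum_zero (seq 1 N)).
  ring.
  intros j Hj; apply in_seq in Hj. rewrite !partial_noread. ring.
  intro; apply H; lia. intro; apply H; lia. Qed.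

Section Cons.
Variable K : nat.
Hypothesis HK : (3 <= K)%nat.
Let DX := DD Cx (fun q => q (Cu 1)) (fun q => q (Cv 1)) Xk K.
Let DY := DD Cy Fu Fv Yk K.

Lemma DX_psi m p : (m < K)%nat -> DX (psi m) p = Xp m p.
Proof. intro Hm. unfold DX. rewrite psi_coord. destruct m as [|[|[|m]]].
  - simpl cpsi. rewrite DD_psi0. reflexivity.
  - unfold cpsi; simpl. rewrite DD_other; try discriminate. reflexivity.
  - unfold cpsi; simpl. rewrite DD_other; try discriminate. unfold Xp; simpl. rewrite Xk_2. reflexivity.
  - unfold cpsi; simpl. rewrite DD_psi_big; try discriminate. rewrite Xp_ge by lia. reflexivity. lia. Qed.

Lemma DY_psi1 p : DY (psi 1) p = 1.
Proof. unfold DY. rewrite psi_coord. unfold cpsi; simpl. rewrite DD_other; try discriminate. reflexivity. Qed.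
Lemma DY_psi2 p : DY (psi 2) p = 0.
Proof. unfold DY. rewrite psi_coord. unfold cpsi; simpl. rewrite DD_other; try discriminate. reflexivity. Qed.
Lemma DY_psi_big m p : (3 <= m < K)%nat -> DY (psi m) p = Yk m p.
Proof. intro Hm. unfold DY. rewrite psi_coord. unfold cpsi.
  destruct (Nat.eqb_spec m 1); [lia|]. destruct (Nat.eqb_spec m 2); [lia|].
  rewrite DD_psi_big; auto; discriminate. Qed.

Lemma Yf_eq n' p : (S n' < K)%nat -> DY (psi (S n')) p = Xp (S (S n')) p - (uu p + vv p) * Xp (S n') p.
Proof. intro H. destruct n' as [|[|m]].
  - rewrite DY_psi1. unfold Xp; simpl. rewrite Xk_2. ring.
  - rewrite DY_psi2. rewrite Xp_rec. unfold Xp; simpl. rewrite Xk_2. ring.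
  - rewrite DY_psi_big by lia. rewrite Xp_rec. unfold Yk. simpl Nat.sub.
    rewrite (Xp_ge (S (S m))) by lia. ring. Qed.

Lemma Xp0 : Xp 0 = fun _ => 0. Proof. reflexivity. Qed.
Lemma Xp1 : Xp 1 = fun _ => 0. Proof. reflexivity. Qed.
Lemma Xp2 : Xp 2 = fun _ => 1. Proof. apply functional_extensionality; intro; unfold Xp; simpl; apply Xk_2. Qed.

Lemma claim : forall j, (j <= K)%nat -> forall p, Dom p -> DY (Xp j) p = DX (Yp j) p.
Proof.
  assert (forall n j, (j <= n)%nat -> (j <= K)%nat -> forall p, Dom p -> DY (Xp j) p = DX (Yp j) p).
  2:{ intros j Hj; apply (H j); auto. }
  induction n; intros j Hjn HjK p Hp.
  - replace j with 0%nat by lia. unfold DX. rewrite DD_Yp; try discriminate. simpl.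
    rewrite Xp0. unfold DY. rewrite !DD_const. simpl. ring.
  - destruct j as [|[|[|[|n']]]].
    + unfold DX. rewrite DD_Yp; try discriminate. simpl.
      rewrite Xp0. unfold DY. rewrite !DD_const. simpl. ring.
    + unfold DX. rewrite DD_Yp; try discriminate. simpl.
      rewrite Xp0, Xp1. unfold DY. rewrite !DD_const. simpl. ring.
    + unfold DX. rewrite DD_Yp; try discriminate. simpl.
      rewrite Xp1, Xp2. unfold DY. rewrite !DD_const. simpl. ring.
    + unfold DY, DX. rewrite DD_Xp_rec, DD_Yp; try discriminate. simpl (3-1)%nat; simpl (3-2)%nat.
      fold DX. rewrite DX_psi by lia. rewrite Xp1, Xp2. rewrite !DD_const.
      unfold Dom in Hp. unfold Fu, Fv. simpl INR. unfold uu, vv. unfold DX; rewrite DD_const. field. repeat split; intro; apply Hp; lra.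
    + assert (IH1 := IHn (S (S (S n'))) ltac:(lia) ltac:(lia) p Hp).
      assert (IH2 := IHn (S (S n')) ltac:(lia) ltac:(lia) p Hp).
      unfold DX, DY in *. rewrite DD_Yp in IH1, IH2 by discriminate.
      rewrite DD_Xp_rec by discriminate. rewrite DD_Yp by discriminate.
      simpl Nat.sub in *.
      rewrite (DD_Xp_rec Cx _ _ _ _ n') by discriminate.
      fold DX in IH1, IH2 |- *. fold DY in IH1, IH2 |- *.
      rewrite !DX_psi in IH1, IH2 by lia. rewrite (DX_psi (S (S n'))) by lia.
      rewrite Nat.sub_0_r in IH2. rewrite IH1, IH2, Yf_eq by lia.
      unfold Dom in Hp. unfold Fu, Fv, uu, vv. rewrite !S_INR. rewrite (DX_psi n') by lia. field. repeat split; intro; apply Hp; lra.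
Qed.
End Cons.

Lemma part1 k (hk : (3 <= k)%nat) N p : Dom p -> DyB k N (Xk k) p = DxB k N (Yk k) p.
Proof. intro Hp. rewrite DyB_DD by (intros; apply Xk_hi; auto). rewrite DxB_DD by (intros; apply Yk_hi; auto).
  rewrite <- (Xp_eq k) by lia.
  replace (Yk k) with (Yp k).
  apply (claim k hk k (Nat.le_refl k) p Hp).
  apply functional_extensionality; intro q. unfold Yp, Yk. rewrite Xp_ge by lia. reflexivity. Qed.


Lemma pow_le1 u n : 0 <= u <= 1 -> u ^ n <= 1.
Proof. intro H; induction n; simpl. lra.
  assert (0 <= u ^ n) by (apply pow_le; lra). nra. Qed.

Lemma poly_nz d : forall a : nat -> R,
  ~ (forall u, 0 < u -> u ^ d = rsum (seq 0 d) (fun m => a m * u ^ m)).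
Proof.
  induction d; intros a H.
  - specialize (H 1 ltac:(lra)). simpl in H. unfold rsum in H; simpl in H. lra.
  - assert (H1 : forall u, 0 < u -> u ^ S d = a 0%nat + u * rsum (seq 0 d) (fun m => a (S m) * u ^ m)).
    { intros u Hu. rewrite H by auto. simpl seq. rewrite rsum_cons, <- seq_shift, rsum_map, <- rsum_scal.
      f_equal. simpl; ring. apply rsum_ext; intros; simpl; ring. }
    set (B := 1 + rsum (seq 0 d) (fun m => Rabs (a (S m)))).
    assert (HB0 : 0 <= rsum (seq 0 d) (fun m => Rabs (a (S m)))).
    { clear. induction (seq 0 d); unfold rsum in *; simpl. lra. pose proof (Rabs_pos (a (S a0))). lra. }
    assert (HB : forall u, 0 < u <= 1 -> Rabs (u ^ d - rsum (seq 0 d) (fun m => a (S m) * u ^ m)) <= B).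
    { intros u Hu. unfold B. eapply Rle_trans. apply Rabs_triang. rewrite Rabs_Ropp.
      apply Rplus_le_compat. rewrite Rabs_right. apply pow_le1; lra. apply Rle_ge, pow_le; lra.
      apply rsum_abs. intros m _. rewrite Rabs_mult. rewrite (Rabs_right (u ^ m)).
      assert (u ^ m <= 1) by (apply pow_le1; lra). pose proof (Rabs_pos (a (S m))).
      assert (0 <= u ^ m) by (apply pow_le; lra). nra. apply Rle_ge, pow_le; lra. }
    assert (Ha0 : a 0%nat = 0).
    { destruct (Req_dec (a 0%nat) 0) as [|Hne]; auto. exfalso.
      assert (Hpos : 0 < Rabs (a 0%nat)) by (apply Rabs_pos_lt; auto).
      assert (HBp : 0 < B) by (unfold B; lra).
      set (u := Rmin 1 (Rabs (a 0%nat) / (2 * B))).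
      assert (Hu : 0 < u <= 1).
      { unfold u. split. apply Rmin_glb_lt. lra. apply Rdiv_lt_0_compat; lra. apply Rmin_l. }
      assert (Hu2 : u <= Rabs (a 0%nat) / (2 * B)) by apply Rmin_r.
      assert (E : a 0%nat = u * (u ^ d - rsum (seq 0 d) (fun m => a (S m) * u ^ m))).
      { pose proof (H1 u ltac:(lra)). simpl in H0. lra. }
      assert (Rabs (a 0%nat) <= u * B).
      { rewrite E, Rabs_mult, (Rabs_right u) by lra. apply Rmult_le_compat_l. lra. apply HB; auto. }
      assert (u * B <= Rabs (a 0%nat) / 2).
      { apply Rmult_le_compat_r with (r := B) in Hu2; [|lra].
        replace (Rabs (a 0%nat) / (2 * B) * B) with (Rabs (a 0%nat) / 2) in Hu2 by (field; lra). lra. }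
      lra. }
    apply (IHd (fun m => a (S m))). intros u Hu.
    pose proof (H1 u Hu) as E. rewrite Ha0 in E. simpl in E.
    apply Rmult_eq_reg_l with u; lra.
Qed.


Section NT.
Variables (k N : nat) (g : point -> R).
Hypothesis hk : (3 <= k)%nat.
Hypothesis Hdep : depends_on k N g.
Hypothesis Hsm : smooth_on g.
Hypothesis HX : forall p, Dom p -> Xk k p = DxB k N g p.

Definition Inv c := forall q, Dom q -> forall t, g (upd q c t) = g q.

Lemma Dom_hi c q t : c <> Cu 0 -> c <> Cv 0 -> Dom q -> Dom (upd q c t).
Proof. intros H1 H2 Hq. unfold Dom in *. rewrite !upd_other by auto. auto. Qed.

Lemma Inv_base j : (N < j)%nat -> Inv (Cu j) /\ Inv (Cv j).
Proof. intro Hj. unfold depends_on in Hdep. split; intros q Hq t; apply Hdep; intros c Hc; unfold upd;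
  destruct (coord_eq_dec c _); auto; subst; simpl in Hc; lia. Qed.

Lemma good_a c p : Dom p -> exists a, p c <> a /\ forall s, s <> a -> Dom (upd p c s).
Proof. intro Hp. destruct (coord_eq_dec c (Cu 0)).
  - subst. exists (p (Cv 0)). split. exact Hp. intros s Hs. unfold Dom. rewrite upd_same, upd_other by discriminate. auto.
  - destruct (coord_eq_dec c (Cv 0)).
    + subst. exists (p (Cu 0)). split. intro E; apply Hp; auto. intros s Hs. unfold Dom. rewrite upd_same, upd_other by discriminate. auto.
    + exists (p c + 1). split. lra. intros s _. unfold Dom. rewrite !upd_other by auto. auto. Qed.

Lemma PI c' : c' <> Cu 0 -> c' <> Cv 0 -> Inv c' ->
  forall c p, Dom p -> forall t, partial c g (upd p c' t) = partial c g p.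
Proof. intros H1 H2 Hinv c p Hp t. unfold partial. destruct (coord_eq_dec c c').
  - subst c. rewrite upd_same.
    replace (fun t0 => g (upd (upd p c' t) c' t0)) with (fun t0 => g (upd p c' t0))
      by (apply functional_extensionality; intro; rewrite upd_upd; auto).
    rewrite !(Derive_ext (fun s => g (upd p c' s)) (fun _ => g p)) by (intro; apply Hinv; auto).
    rewrite !Derive_const; auto.
  - rewrite (upd_other p c' t c) by auto.
    destruct (good_a c p Hp) as [a [Ha Hs]].
    apply (Derive_ext_except _ _ _ a Ha). intros s Hsa.
    rewrite upd_comm by auto. apply Hinv. auto. Qed.

Lemma Xk_hi' i j q t : (1 <= j)%nat -> Xk i (upd q (Cu j) t) = Xk i q.
Proof. intro; apply Xk_hi; auto. Qed.
Lemma Xk_hi'' i j q t : (1 <= j)%nat -> Xk i (upd q (Cv j) t) = Xk i q.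
Proof. intro; apply Xk_hi; auto. Qed.

Lemma ZP M : (M <= N)%nat -> Inv (Cu (S M)) -> Inv (Cv (S M)) ->
  forall p, Dom p -> partial (Cu M) g p = 0 /\ partial (Cv M) g p = 0.
Proof. intros HM Hu Hv p Hp. split.
  - set (p1 := upd p (Cu (S M)) (p (Cu (S M)) + 1)).
    assert (Hp1 : Dom p1) by (apply Dom_hi; auto; discriminate).
    assert (PIu := PI (Cu (S M)) ltac:(discriminate) ltac:(discriminate) Hu).
    assert (E : DxB k N g p1 = DxB k N g p + partial (Cu M) g p).
    { unfold DxB. unfold p1 at 1. rewrite PIu by auto.
      rewrite (rsum_ext (seq 0 (S N)) _ (fun j => (p (Cu (S j)) * partial (Cu j) g p + p (Cv (S j)) * partial (Cv j) g p)
          + (if Nat.eq_dec j M then partial (Cu M) g p else 0))).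
      2:{ intros j _. unfold p1. rewrite !PIu by auto.
          rewrite (upd_other p (Cu (S M)) _ (Cv (S j))) by discriminate.
          unfold upd at 1. destruct (coord_eq_dec (Cu (S j)) (Cu (S M))) as [e|ne];
          destruct (Nat.eq_dec j M); try (inversion e; lia); subst; try ring. congruence. }
      rewrite rsum_plus. rewrite (rsum_single _ _ M (fun j => if Nat.eq_dec j M then partial (Cu M) g p else 0)); [| lia | intros i0 Hi0; destruct (Nat.eq_dec i0 M); [congruence|reflexivity]].
      destruct (Nat.eq_dec M M); [|congruence].
      rewrite (rsum_ext (seq 3 (k-3)) (fun i => Xk i p1 * partial (Cpsi i) g p1) (fun i => Xk i p * partial (Cpsi i) g p)).
      ring. intros i _. unfold p1. rewrite PIu, Xk_hi' by (auto; lia). auto. }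
    assert (E1 := HX p Hp). assert (E2 := HX p1 Hp1).
    unfold p1 in E2 at 1. rewrite Xk_hi' in E2 by lia. lra.
  - set (p1 := upd p (Cv (S M)) (p (Cv (S M)) + 1)).
    assert (Hp1 : Dom p1) by (apply Dom_hi; auto; discriminate).
    assert (PIv := PI (Cv (S M)) ltac:(discriminate) ltac:(discriminate) Hv).
    assert (E : DxB k N g p1 = DxB k N g p + partial (Cv M) g p).
    { unfold DxB. unfold p1 at 1. rewrite PIv by auto.
      rewrite (rsum_ext (seq 0 (S N)) _ (fun j => (p (Cu (S j)) * partial (Cu j) g p + p (Cv (S j)) * partial (Cv j) g p)
          + (if Nat.eq_dec j M then partial (Cv M) g p else 0))).
      2:{ intros j _. unfold p1. rewrite !PIv by auto.
          rewrite (upd_other p (Cv (S M)) _ (Cu (S j))) by discriminate.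
          unfold upd at 1. destruct (coord_eq_dec (Cv (S j)) (Cv (S M))) as [e|ne];
          destruct (Nat.eq_dec j M); try (inversion e; lia); subst; try ring. congruence. }
      rewrite rsum_plus. rewrite (rsum_single _ _ M (fun j => if Nat.eq_dec j M then partial (Cv M) g p else 0)); [| lia | intros i0 Hi0; destruct (Nat.eq_dec i0 M); [congruence|reflexivity]].
      destruct (Nat.eq_dec M M); [|congruence].
      rewrite (rsum_ext (seq 3 (k-3)) (fun i => Xk i p1 * partial (Cpsi i) g p1) (fun i => Xk i p * partial (Cpsi i) g p)).
      ring. intros i _. unfold p1. rewrite PIv, Xk_hi'' by (auto; lia). auto. }
    assert (E1 := HX p Hp). assert (E2 := HX p1 Hp1).
    unfold p1 in E2 at 1. rewrite Xk_hi'' in E2 by lia. lra.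
Qed.

Lemma deriv_line q c s : Dom (upd q c s) ->
  ex_derive (fun t => g (upd q c t)) s /\ Derive (fun t => g (upd q c t)) s = partial c g (upd q c s).
Proof. intro Hd. destruct (Hsm nil (upd q c s) Hd) as [Hex _]. specialize (Hex c).
  change (iterpartial nil g) with g in Hex. rewrite upd_same in Hex.
  split. eapply ex_derive_ext; [|exact Hex]. intro; simpl; rewrite upd_upd; auto.
  unfold partial. rewrite upd_same. apply Derive_ext. intro; rewrite upd_upd; auto. Qed.

Lemma Inv_step c : c <> Cu 0 -> c <> Cv 0 -> (forall p, Dom p -> partial c g p = 0) -> Inv c.
Proof. intros H1 H2 H q Hq t.
  rewrite <- (upd_id q c) at 2.
  symmetry. apply (const_MVT (fun s => g (upd q c s))).
  intros s _. assert (Hd : Dom (upd q c s)) by (apply Dom_hi; auto).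
  destruct (deriv_line q c s Hd) as [Ha Hb]. split; auto. rewrite Hb. apply H; auto. Qed.

Lemma Inv_all : forall M, (1 <= M)%nat -> Inv (Cu M) /\ Inv (Cv M).
Proof.
  assert (forall d M, (1 <= M)%nat -> (N + 1 <= M + d)%nat -> Inv (Cu M) /\ Inv (Cv M)).
  { induction d; intros M HM Hd.
    - apply Inv_base; lia.
    - destruct (le_lt_dec (N+1) M). apply Inv_base; lia.
      destruct (IHd (S M) ltac:(lia) ltac:(lia)) as [Hu Hv].
      split; apply Inv_step; try discriminate; try (intro E; inversion E; lia); intros p Hp; apply (ZP M); auto; lia. }
  intros M HM. apply (H (N+1)%nat); lia. Qed.

Lemma dU0 : forall p, Dom p -> partial (Cu 0) g p = 0.
Proof. intros p Hp. destruct (Inv_all 1 ltac:(lia)). apply (ZP 0); auto; lia. Qed.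

Lemma Inv0 q : q (Cv 0) = 0 -> 0 < q (Cu 0) -> forall s, 0 < s -> g (upd q (Cu 0) s) = g q.
Proof. intros Hv Hu s Hs.
  rewrite <- (upd_id q (Cu 0)) at 2. symmetry.
  apply (const_MVT (fun t => g (upd q (Cu 0) t))).
  intros r Hr. assert (0 < r).
  { assert (0 < Rmin (q (Cu 0)) s) by (apply Rmin_glb_lt; auto). lra. }
  assert (Hd : Dom (upd q (Cu 0) r)).
  { unfold Dom. rewrite upd_same, upd_other by discriminate. lra. }
  destruct (deriv_line q (Cu 0) r Hd) as [Ha Hb]. split; auto. rewrite Hb. apply dU0; auto. Qed.

Definition pu (u : R) : point := fun c => match c with Cu O => u | _ => 0 end.

Lemma pu_partial c u : c <> Cu 0 -> c <> Cv 0 -> 0 < u -> partial c g (pu u) = partial c g (pu 1).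
Proof. intros H1 H2 Hu. unfold partial.
  assert (E : pu u c = pu 1 c).
  { destruct c as [| |[|i]|i|i]; try reflexivity. congruence. }
  rewrite E. apply Derive_ext. intro t.
  replace (upd (pu u) c t) with (upd (upd (pu 1) c t) (Cu 0) u).
  - apply Inv0. rewrite upd_other by (intro; subst; auto). reflexivity.
    rewrite upd_other by (intro; subst; auto). simpl. lra. auto.
  - apply functional_extensionality; intro d. unfold upd.
    destruct (coord_eq_dec d (Cu 0)); destruct (coord_eq_dec d c); subst; try congruence.
    reflexivity. destruct d as [| |[|i]|i|i]; try reflexivity. congruence. Qed.

Lemma sigma_pu m u : sigma m (pu u) = u ^ m.
Proof. induction m. rewrite sigma_0; reflexivity.
  rewrite sigma_S, IHm. unfold vv, uu; simpl. ring. Qed.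
Lemma psi_pu j u : psi j (pu u) = 0.
Proof. rewrite psi_coord. unfold cpsi. destruct (Nat.eqb j 1), (Nat.eqb j 2); reflexivity. Qed.
Lemma Xk_pu i u : Xk i (pu u) = u ^ (i - 2).
Proof. unfold Xk. rewrite sigma_pu. rewrite rsum_zero. ring. intros; rewrite psi_pu; ring. Qed.

Lemma contra : False.
Proof.
  set (c0 := partial Cx g (pu 1)).
  set (ci := fun i => partial (Cpsi i) g (pu 1)).
  set (d' := (k - 3)%nat).
  set (a := fun m => match m with O => c0 | _ => ci (S (S m)) end).
  apply (poly_nz (S d') a). intros u Hu.
  assert (Hd : Dom (pu u)) by (unfold Dom, pu; simpl; lra).
  pose proof (HX (pu u) Hd) as E. rewrite Xk_pu in E. unfold DxB in E.
  rewrite (rsum_zero (seq 0 (S N))) in E by (intros; simpl; ring).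
  rewrite pu_partial in E by (auto; discriminate).
  replace (k - 2)%nat with (S d') in E by (unfold d'; lia).
  rewrite E. simpl seq. rewrite rsum_cons. unfold a at 1. fold c0. simpl pow.
  fold d'. rewrite <- !seq_shift, !rsum_map.
  rewrite (rsum_ext _ _ (fun i => a (S i) * u ^ S i)). ring.
  intros i _. rewrite Xk_pu, pu_partial by (auto; discriminate).
  replace (S (S (S i)) - 2)%nat with (S i) by lia. unfold a, ci. ring. Qed.
End NT.


Theorem mainTheorem7 (k : nat) (hk : (3 <= k)%nat) :
  (forall (N : nat) (p : point), Dom p ->
     DyB k N (Xk k) p = DxB k N (Yk k) p) /\
  ~ (exists (N : nat) (g : point -> R),
       depends_on k N g /\ smooth_on g /\
       forall p : point, Dom p ->
         Xk k p = DxB k N g p /\ Yk k p = DyB k N g p).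
Proof.
  split.
  - intros N p Hp. apply part1; auto.
  - intros [N [g [Hdep [Hsm Hall]]]].
    apply (contra k N g); auto.
    intros p Hp; apply Hall; auto.
Qed.
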